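(* Let $f:[0,\infty)\to[0,\infty)$ be continuously differentiable with $f>0$ on $[t_0,\infty)$ for some $t_0\ge0$ and $f\in C^2([t_0,\infty))$, let $g=\log f$ on $[t_0,\infty)$, and assume condition (H1) of the context with the pair $(q,p)$. Then $\frac1p+\frac1q=1$, where $1/\infty=0$.
   Context: Condition (H1): (i) $g'(t)>0$ and $g''(t)>0$ for all $t\ge t_0$, and there is a pair $(q,p)$ with either $q=1$ and $p\in(0,\infty]$, or $q\in(1,\infty)$ and $p\in(0,\infty)$, such that $\lim_{t\to\infty}\frac{g'(t)^2}{g(t)g''(t)}=q$ and $\lim_{t\to\infty}\frac{tg'(t)}{g(t)}=p$; (ii) if $q=1$, then $tg'(t)/g(t)$ is nondecreasing on $[t_0,\infty)$ and there exist $k\in\mathbb{N}$ and $\hat g\in C^2([t_0,\infty))$ with $f=\exp_k\circ\hat g$ and $\hat g'/\hat g$ nonincreasing on $[t_0,\infty)$ ($\exp_1=\exp$, $\exp_k=\exp_{k-1}\circ\exp$). *)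

(* Defs.v *)
From Stdlib Require Import Reals.
From Coquelicot Require Import Coquelicot.
Open Scope R_scope.

Definition deriv_within (D : R -> Prop) (h : R -> R) (x l : R) : Prop :=
  filterlim (fun y => (h y - h x) / (y - x))
            (within (fun y => D y /\ y <> x) (locally x)) (locally l).

Definition cont_within (D : R -> Prop) (h : R -> R) (x : R) : Prop :=
  filterlim h (within D (locally x)) (locally (h x)).

Definition from (a : R) : R -> Prop := fun x => a <= x.

Definition C1_on_from (a : R) (h dh : R -> R) : Prop :=
  (forall x, a <= x -> deriv_within (from a) h x (dh x)) /\
  (forall x, a <= x -> cont_within (from a) dh x).

Definition C2_on_from (a : R) (h dh ddh : R -> R) : Prop :=
  (forall x, a <= x -> deriv_within (from a) h x (dh x)) /\
  (forall x, a <= x -> deriv_within (from a) dh x (ddh x)) /\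
  (forall x, a <= x -> cont_within (from a) ddh x).

(* iterated exponential: expk 1 = exp, expk (k+1) = expk k o exp
   (equivalently exp o expk k) *)
Fixpoint expk (k : nat) : R -> R :=
  match k with
  | O => fun x => x
  | S k' => fun x => exp (expk k' x)
  end.

Definition nondecr_from (a : R) (h : R -> R) : Prop :=
  forall s t, a <= s -> s <= t -> h s <= h t.
Definition nonincr_from (a : R) (h : R -> R) : Prop :=
  forall s t, a <= s -> s <= t -> h t <= h s.

(* Main.v *)
Require Import Defs.
From Stdlib Require Import Reals Lra Psatz.
From Coquelicot Require Import Coquelicot.
Open Scope R_scope.

Lemma dw_dpl t0 h x l : t0 < x -> deriv_within (from t0) h x l -> derivable_pt_lim h x l.
Proof.
  intros Hx H eps Heps.
  destruct (H (ball l eps) (locally_ball l (mkposreal eps Heps))) as [d Hd].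
  assert (Hpos : 0 < Rmin d (x - t0)).
  { apply Rmin_pos; [apply cond_pos | lra]. }
  exists (mkposreal _ Hpos). intros hh Hh0 Hhd. simpl in Hhd.
  assert (Hb : ball x d (x + hh)).
  { unfold ball; simpl; unfold AbsRing_ball, abs, minus, plus, opp; simpl.
    replace (x + hh + - x) with hh by ring. eapply Rlt_le_trans; [exact Hhd| apply Rmin_l]. }
  assert (Hd2 : from t0 (x + hh) /\ x + hh <> x).
  { split; unfold from.
    - assert (Rabs hh < x - t0) by (eapply Rlt_le_trans; [exact Hhd| apply Rmin_r]).
      apply Rabs_def2 in H0. lra.
    - lra. }
  specialize (Hd _ Hb Hd2).
  unfold ball in Hd; simpl in Hd; unfold AbsRing_ball, abs, minus, plus, opp in Hd; simpl in Hd.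
  replace (x + hh - x) with hh in Hd by ring. exact Hd.
Qed.

Lemma lim_ratio (h h' : R -> R) A c :
  (forall x, A < x -> derivable_pt_lim h x (h' x)) ->
  is_lim h' p_infty (Finite c) -> is_lim (fun t => h t / t) p_infty (Finite c).
Proof.
  intros Hd Hl P [eps HP].
  assert (He2 : 0 < eps / 2) by (pose proof (cond_pos eps); lra).
  destruct (Hl (ball c (mkposreal _ He2)) (locally_ball c (mkposreal _ He2))) as [M1 HM1].
  set (T := Rmax (Rmax A M1) 0 + 1).
  assert (HT1 : A < T /\ M1 < T /\ 0 < T).
  { unfold T. pose proof (Rmax_l (Rmax A M1) 0). pose proof (Rmax_r (Rmax A M1) 0).
    pose proof (Rmax_l A M1). pose proof (Rmax_r A M1). lra. }
  set (K := h T - c * T).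
  exists (Rmax T (2 * Rabs K / eps)).
  intros t Ht. apply HP.
  assert (HtT : T < t) by (eapply Rle_lt_trans; [apply Rmax_l|exact Ht]).
  assert (HtK : 2 * Rabs K / eps < t) by (eapply Rle_lt_trans; [apply Rmax_r|exact Ht]).
  destruct (MVT_cor2 h h' T t HtT) as [xi [Hxi1 Hxi2]].
  { intros y Hy. apply Hd. lra. }
  assert (Hb : Rabs (h' xi - c) < eps / 2).
  { specialize (HM1 xi ltac:(lra)). unfold ball in HM1; simpl in HM1;
    unfold AbsRing_ball, abs, minus, plus, opp in HM1; simpl in HM1. exact HM1. }
  apply Rabs_def2 in Hb.
  assert (HK : Rabs K < eps / 2 * t).
  { pose proof (cond_pos eps). 
    assert (2 * Rabs K / eps * eps = 2 * Rabs K) by (field; lra).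
    nra. }
  apply Rabs_def2 in HK.
  unfold ball; simpl; unfold AbsRing_ball, abs, minus, plus, opp; simpl.
  set (z := h t / t).
  assert (Hz : z * t = h t) by (unfold z; field; lra).
  apply Rabs_def1.
  - assert (h t - c * t = (h' xi - c) * (t - T) + K) by (unfold K; nra).
    nra.
  - assert (h t - c * t = (h' xi - c) * (t - T) + K) by (unfold K; nra).
    nra.
Qed.

Lemma ev_and (P Q : R -> Prop) :
  Rbar_locally' p_infty P -> Rbar_locally' p_infty Q -> Rbar_locally' p_infty (fun t => P t /\ Q t).
Proof.
  intros [M1 H1] [M2 H2]. exists (Rmax M1 M2). intros x Hx. split.
  - apply H1. eapply Rle_lt_trans; [apply Rmax_l|exact Hx].
  - apply H2. eapply Rle_lt_trans; [apply Rmax_r|exact Hx].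
Qed.

Theorem lemma2p2
  (f df : R -> R) (t0 : R)
  (Hf_nonneg : forall x, 0 <= x -> 0 <= f x)
  (Hf_C1 : C1_on_from 0 f df)
  (Ht0 : 0 <= t0)
  (Hf_pos : forall x, t0 <= x -> 0 < f x)
  (Hf_C2 : exists df' ddf, C2_on_from t0 f df' ddf)
  (g dg ddg : R -> R)
  (Hg : forall x, t0 <= x -> g x = ln (f x))
  (Hdg : forall x, t0 <= x -> deriv_within (from t0) g x (dg x))
  (Hddg : forall x, t0 <= x -> deriv_within (from t0) dg x (ddg x))
  (q : R) (p : Rbar)
  (H1_pos : forall t, t0 <= t -> 0 < dg t /\ 0 < ddg t)
  (H1_qp : (q = 1 /\ Rbar_lt (Finite 0) p) \/
           (1 < q /\ exists r : R, p = Finite r /\ 0 < r))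
  (H1_limq : is_lim (fun t => (dg t) ^ 2 / (g t * ddg t)) p_infty (Finite q))
  (H1_limp : is_lim (fun t => t * dg t / g t) p_infty p)
  (H1_ii : q = 1 ->
     nondecr_from t0 (fun t => t * dg t / g t) /\
     exists (k : nat) (gh dgh ddgh : R -> R),
       (1 <= k)%nat /\ C2_on_from t0 gh dgh ddgh /\
       (forall t, t0 <= t -> f t = expk k (gh t)) /\
       nonincr_from t0 (fun t => dgh t / gh t)) :
  Rbar_plus (Rbar_inv p) (Finite (/ q)) = Finite 1.
Proof.
  assert (Hq1 : 1 <= q) by (destruct H1_qp as [[-> _]|[? _]]; lra).
  assert (Hp0 : Rbar_lt (Finite 0) p) by (destruct H1_qp as [[_ ?]|[_ [r [-> ?]]]]; auto).
  assert (Hev : Rbar_locally' p_infty (fun t => 0 < t * dg t / g t)).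
  { destruct p as [r| |]; simpl in Hp0; try contradiction.
    - assert (Hr2 : 0 < r / 2) by lra.
      destruct (H1_limp (ball r (mkposreal _ Hr2)) (locally_ball r (mkposreal _ Hr2))) as [M HM].
      exists M. intros x Hx. specialize (HM x Hx).
      unfold ball in HM; simpl in HM; unfold AbsRing_ball, abs, minus, plus, opp in HM; simpl in HM.
      apply Rabs_def2 in HM. lra.
    - apply (H1_limp (fun y => 0 < y)). exists 0. intros; lra. }
  assert (Hev2 : Rbar_locally' p_infty (fun t => t0 < t /\ 0 < t /\ g t <> 0 /\ 0 < t * dg t / g t)).
  { destruct Hev as [M HM]. exists (Rmax M (Rmax t0 0)). intros x Hx.
    pose proof (Rmax_l M (Rmax t0 0)). pose proof (Rmax_r M (Rmax t0 0)).
    pose proof (Rmax_l t0 0). pose proof (Rmax_r t0 0).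
    assert (Hp := HM x ltac:(lra)).
    repeat split; try lra.
    intro Hg0. rewrite Hg0 in Hp. unfold Rdiv in Hp. rewrite Rinv_0, Rmult_0_r in Hp. lra. }
  set (hh := fun t => g t / dg t).
  set (hd := fun x => (dg x * dg x - ddg x * g x) / (dg x)²).
  assert (Hder : forall x, t0 < x -> derivable_pt_lim hh x (hd x)).
  { intros x Hx. unfold hh, hd.
    apply (derivable_pt_lim_div g dg x (dg x) (ddg x)).
    - apply (dw_dpl t0); auto. apply Hdg; lra.
    - apply (dw_dpl t0); auto. apply Hddg; lra.
    - pose proof (H1_pos x ltac:(lra)). lra. }
  assert (Hlimd : is_lim hd p_infty (Finite (1 - / q))).
  { apply (is_lim_ext_loc (fun t => 1 - / (dg t ^ 2 / (g t * ddg t)))).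
    - destruct Hev2 as [M HM]. exists M. intros x Hx.
      destruct (HM x Hx) as [H1 [H2 [H3 H4]]].
      pose proof (H1_pos x ltac:(lra)). unfold hd, Rsqr. field. repeat split; lra.
    - apply (is_lim_minus _ _ _ (Finite 1) (Finite (/ q))).
      + apply is_lim_const.
      + apply (is_lim_inv _ _ (Finite q)); auto. intro Hc. injection Hc. lra.
      + reflexivity. }
  pose proof (lim_ratio hh hd t0 _ Hder Hlimd) as Hrat.
  assert (Heq : Rbar_locally' p_infty (fun t => / (hh t / t) = t * dg t / g t)).
  { destruct Hev2 as [M HM]. exists M. intros x Hx.
    destruct (HM x Hx) as [H1 [H2 [H3 H4]]].
    pose proof (H1_pos x ltac:(lra)). unfold hh. field. repeat split; lra. }
  destruct (Req_dec q 1) as [Hq|Hq].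
  - assert (Hl : is_lim (fun t => t * dg t / g t) p_infty p_infty).
    { apply (is_lim_ext_loc _ _ _ _ Heq).
      apply is_lim_Rinv_0_right.
      + replace (Finite 0) with (Finite (1 - / q)); auto. rewrite Hq, Rinv_1.
        apply f_equal; ring.
      + destruct Hev2 as [M HM]. exists M. intros x Hx.
        destruct (HM x Hx) as [H1 [H2 [H3 H4]]].
        pose proof (H1_pos x ltac:(lra)). unfold hh.
        replace (g x / dg x / x) with (/ (x * dg x / g x)) by (field; repeat split; lra).
        apply Rinv_0_lt_compat; auto. }
    apply is_lim_unique in Hl. apply is_lim_unique in H1_limp.
    rewrite <- H1_limp, Hl. simpl. rewrite Hq, Rinv_1. apply f_equal; ring.
  - assert (Hc : 0 < 1 - / q).
    { assert (/ q < 1). { rewrite <- Rinv_1. apply Rinv_lt_contravar; lra. } lra. }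
    assert (Hl : is_lim (fun t => t * dg t / g t) p_infty (Finite (/ (1 - / q)))).
    { apply (is_lim_ext_loc _ _ _ _ Heq).
      apply (is_lim_inv _ _ (Finite (1 - / q)) Hrat).
      intro H; injection H; lra. }
    apply is_lim_unique in Hl. apply is_lim_unique in H1_limp.
    rewrite <- H1_limp, Hl. simpl. f_equal. rewrite Rinv_inv. ring.
Qed.
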